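(* Let $M\in\mathrm{M}_n(\mathbb{K})$. If there exists a nonzero $M$-code $\mathcal{C}\subsetneq\mathbb{L}^n$ with parameters $[n,k]$ that is MRD, i.e. $M_1(\mathcal{C})=n-k+1$, then the minimal polynomial of $M$ is $\mu_M=\pi^\ell$ for some integer $\ell\ge1$ and some monic polynomial $\pi\in\mathbb{K}[x]$ irreducible over $\mathbb{K}$.
   Context: Let $\mathbb{L}/\mathbb{K}$ be a field extension of finite degree $m$, and $n\ge 1$ an integer with $m\ge n$ (standing assumption). Vectors are row vectors. For $c=(c_1,\dots,c_n)\in\mathbb{L}^n$, $\mathrm{Rsupp}(c)\subseteq\mathbb{K}^n$ is the $\mathbb{K}$-row space of the $m\times n$ matrix over $\mathbb{K}$ whose $j$-th column is the coordinate vector of $c_j$ in a fixed $\mathbb{K}$-basis of $\mathbb{L}$, and $\mathrm{wt}_R(c)=\dim_{\mathbb{K}}\mathrm{Rsupp}(c)$; for an $\mathbb{L}$-subspace $\mathcal{D}$, $\mathrm{wt}_R(\mathcal{D})$ is the $\mathbb{K}$-dimension of the span of all $\mathrm{Rsupp}(d)$, $d\in\mathcal{D}$. For a linear $[n,k]$ code $\mathcal{C}$ and $1\le r\le k$, $M_r(\mathcal{C})=\min\{\mathrm{wt}_R(\mathcal{D}):\mathcal{D}\subseteq\mathcal{C},\dim_{\mathbb{L}}\mathcal{D}=r\}$. For $M\in\mathrm{M}_n(\mathbb{K})$, a linear code $\mathcal{C}\subseteq\mathbb{L}^n$ is an $M$-code if $cM^t\in\mathcal{C}$ for all $c\in\mathcal{C}$.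 *)

(* Defs.v *)
From HB Require Import structures.
From mathcomp Require Import all_boot all_order all_algebra all_field.
Set Implicit Arguments. Unset Strict Implicit. Unset Printing Implicit Defensive.
Import GRing.Theory.
Local Open Scope ring_scope.

(* K : fieldType, L : fieldExtType K (finite extension,
   m = \dim {:L}).  Vectors of L^n are row vectors 'rV[L]_n. *)

Section RankMetric.
Variables (K : fieldType) (L : fieldExtType K) (n : nat).

Definition coord_mx (c : 'rV[L]_n) : 'M[K]_(\dim {:L}, n) :=
  \matrix_(i < \dim {:L}, j < n) coord (vbasis {:L}) i (c 0 j).

(* Rsupp(c): its K-row space (represented, as in mxalgebra, by the matrix
   whose rows span it). *)
Definition Rsupp (c : 'rV[L]_n) : 'M[K]_(\dim {:L}, n) := coord_mx c.

Definition wtR (c : 'rV[L]_n) : nat := \rank (Rsupp c).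

Definition wtR_sub (D : {vspace 'rV[L]_n}) (w : nat) : Prop :=
  exists V : 'M[K]_n,
    [/\ (forall d, d \in D -> (Rsupp d <= V)%MS),
        (forall V' : 'M[K]_n, (forall d, d \in D -> (Rsupp d <= V')%MS) ->
              (V <= V')%MS)
      & \rank V = w].

Definition Mr (C : {vspace 'rV[L]_n}) (r : nat) (v : nat) : Prop :=
  (exists D : {vspace 'rV[L]_n}, [/\ (D <= C)%VS, \dim D = r & wtR_sub D v]) /\
  (forall (D : {vspace 'rV[L]_n}) (w : nat),
      (D <= C)%VS -> \dim D = r -> wtR_sub D w -> (v <= w)%N).

Definition is_M_code (M : 'M[K]_n) (C : {vspace 'rV[L]_n}) : Prop :=
  forall c, c \in C -> c *m (map_mx (in_alg L) M)^T \in C.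

Definition is_MRD (C : {vspace 'rV[L]_n}) : Prop :=
  Mr C 1 (n - \dim C + 1)%N.

End RankMetric.

(* Main.v *)
Require Import Defs.
From HB Require Import structures.
From mathcomp Require Import all_boot all_order all_algebra all_field.
From Stdlib Require Import Classical.
From mathcomp Require Import zify.
Set Implicit Arguments. Unset Strict Implicit. Unset Printing Implicit Defensive.
Import GRing.Theory.
Local Open Scope ring_scope.

Section LA.
Variables (K : fieldType) (L : fieldExtType K).

Lemma coord_mxM N p (c : 'rV[L]_N) (P : 'M[K]_(N, p)) :
  coord_mx (c *m map_mx (in_alg L) P) = coord_mx c *m P.
Proof.
apply/matrixP => i j; rewrite !mxE.
under eq_bigr => k _ do rewrite !mxE mulr_algr.
rewrite linear_sum; apply: eq_bigr => k _.
by rewrite linearZ /= mxE mulrC.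
Qed.

Lemma coord_mx0 N : coord_mx (0 : 'rV[L]_N) = 0.
Proof. by apply/matrixP => i j; rewrite !mxE linear0. Qed.

Lemma coord_mxZ N (a : L) (c : 'rV[L]_N) :
  exists A : 'M[K]_(\dim {:L}), coord_mx (a *: c) = A *m coord_mx c.
Proof.
exists (\matrix_(i, l) coord (vbasis {:L}) i (a * (vbasis {:L})`_l)).
apply/matrixP => i j; rewrite !mxE.
rewrite {1}(coord_vbasis (memvf (c 0 j))) mulr_sumr linear_sum.
apply: eq_bigr => l _; rewrite !mxE -scalerAr linearZ /= mulrC.
by [].
Qed.


Lemma wtR_line N (c : 'rV[L]_N) : wtR_sub <[c]>%VS (wtR c).
Proof.
exists (<<Rsupp c>>%MS); split.
- move=> d /vlineP [a ->]; rewrite genmxE /Rsupp.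
  have [A ->] := coord_mxZ a c; exact: submxMl.
- by move=> V' HV; rewrite genmxE; apply: HV; apply: memv_line.
- by rewrite genmxE.
Qed.

Lemma MRD_weight N (C : {vspace 'rV[L]_N}) : is_MRD C ->
  forall c, c \in C -> c != 0 -> (N - \dim C + 1 <= wtR c)%N.
Proof.
move=> [_ H] c cC c0; apply: H (wtR_line c).
- by rewrite -memvE.
- by rewrite dim_vline c0.
Qed.

Lemma Mcode_horner n (M : 'M[K]_n.+1) (C : {vspace 'rV[L]_n.+1}) p :
  is_M_code M C -> forall c, c \in C ->
  c *m (map_mx (in_alg L) (horner_mx M p))^T \in C.
Proof.
move=> HM; elim/poly_ind: p => [|p a IH] c cC.
  by rewrite rmorph0 map_mx0 trmx0 mulmx0 mem0v.
rewrite rmorphD rmorphM /= horner_mx_X horner_mx_C -mulmxE map_mxD map_mxM.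
rewrite map_scalar_mx linearD /= trmx_mul mulmxDr mulmxA tr_scalar_mx mul_mx_scalar.
apply: memvD; last exact: memvZ.
exact: IH (HM _ cC).
Qed.


Lemma singleton N (D : {vspace 'rV[L]_N}) (W : 'M[K]_N) (d : nat) :
  (0 < d)%N -> (forall c, c \in D -> (Rsupp c <= W)%MS) ->
  (forall c, c \in D -> c != 0 -> (d <= wtR c)%N) ->
  (\dim D <= \rank W + 1 - d)%N.
Proof.
move=> d0 HW Hd.
set r := \rank W; set t := (r + 1 - d)%N.
have tr : (t <= r)%N by rewrite /t; lia.
pose B := row_base W.
pose G : 'M[K]_(N, t) := pinvmx B *m (pid_mx t : 'M_(r, t)).
pose f : 'Hom('rV[L]_N, 'rV[L]_t) := linfun (mulmxr (map_mx (in_alg L) G)).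
have BG : B *m G = pid_mx t by rewrite /G mulmxA mulmxVp ?row_base_free // mul1mx.
have Hinj : forall c, c \in D -> c *m map_mx (in_alg L) G = 0 -> c = 0.
  move=> c cD cG; apply/eqP; apply/negP => c0.
  have := Hd c cD (introN idP c0); rewrite /wtR.
  set X := Rsupp c.
  have XB : (X <= B)%MS by rewrite eq_row_base; apply: HW.
  have XG : X *m G = 0 by rewrite /X /Rsupp -coord_mxM cG coord_mx0.
  have := mxrank_Frobenius (X *m pinvmx B) B G.
  rewrite mulmxKpV // XG mxrank0 BG rank_pid_mx // (eqnP (row_base_free W)).
  rewrite /t /r; lia.
have Hker : (D :&: lker f)%VS = 0%VS.
  apply/eqP; rewrite -subv0; apply/subvP => x; rewrite memv_cap memv0 memv_ker.
  by case/andP => xD; rewrite lfunE /= => /eqP fx; rewrite (Hinj x xD fx).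
rewrite -(limg_dim_eq Hker).
apply: leq_trans (dimvS (subvf _)) _.
rewrite dimvf. have -> : dim (matrix_matrix__canonical__vector_Vector L 1 t) = (1 * t)%N by apply: dim_matrix. by rewrite mul1n.
Qed.


Lemma no_split n (M : 'M[K]_n.+1) (C : {vspace 'rV[L]_n.+1}) (f g : {poly K}) :
  C != 0%VS -> C != fullv -> is_M_code M C -> is_MRD C ->
  mxminpoly M = f * g -> coprimep f g -> (1 < size f)%N -> (1 < size g)%N -> False.
Proof.
move=> C0 Cf HM HMRD Hmu Hcop Hf Hg.
have [u Hu] := Bezout_eq1_coprimepP _ _ Hcop.
pose E1 := horner_mx M (u.2 * g); pose E2 := horner_mx M (u.1 * f).
have HE : E1 + E2 = 1 by rewrite /E1 /E2 -rmorphD addrC Hu rmorph1.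
have HE21 : E2 * E1 = 0.
  apply/eqP; rewrite /E1 /E2 -rmorphM -dvd_mxminpoly Hmu.
  by apply: dvdp_mul; apply: dvdp_mull.
have E1n0 : E1 != 0.
  apply/eqP => E10; move: Hf.
  have H1 : f %| u.2 * g.
    apply: dvdp_trans (dvdp_mulIl f g) _; rewrite -Hmu; exact: mxminpoly_min.
  have : f %| 1 by rewrite -Hu dvdp_add // dvdp_mull.
  by rewrite dvdp1 => /eqP ->.
have E2n0 : E2 != 0.
  apply/eqP => E20; move: Hg.
  have H1 : g %| u.1 * f.
    apply: dvdp_trans (dvdp_mulIr f g) _; rewrite -Hmu; exact: mxminpoly_min.
  have : g %| 1 by rewrite -Hu dvdp_add // dvdp_mull.
  by rewrite dvdp1 => /eqP ->.
pose P1 := E1^T; pose P2 := E2^T.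
set k := \dim C.
have k0 : (0 < k)%N by rewrite lt0n dimv_eq0.
have dimf : \dim (fullv : {vspace 'rV[L]_n.+1}) = n.+1.
  rewrite dimvf.
  have -> : dim (matrix_matrix__canonical__vector_Vector L 1 n.+1) = (1 * n.+1)%N
    by apply: dim_matrix.
  by rewrite mul1n.
have kN : (k < n.+1)%N.
  have := dimv_leqif_eq (subvf C); rewrite dimf => H.
  by case: H => Hle Heq; rewrite ltn_neqAle /k Hle Heq Cf.
have Hw := MRD_weight HMRD.
pose F (P : 'M[K]_n.+1) : 'End('rV[L]_n.+1) := linfun (mulmxr (map_mx (in_alg L) P)).
have HFE : forall (E : 'M[K]_n.+1) p, E = horner_mx M p ->
    (\dim (F E^T @: C) <= \rank E^T + 1 - (n.+1 - k + 1))%N.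
  move=> E p ->; apply: singleton; first by rewrite addn1.
  - move=> x /memv_imgP [c cC ->]; rewrite lfunE /= /Rsupp coord_mxM.
    exact: submxMl.
  - move=> x /memv_imgP [c cC ->] x0; apply: Hw x0.
    by rewrite lfunE /= -map_trmx; apply: Mcode_horner.
have H1 := HFE E1 _ erefl; have H2 := HFE E2 _ erefl.
have HC : (C <= F P1 @: C + F P2 @: C)%VS.
  apply/subvP => c cC.
  have -> : c = F P1 c + F P2 c.
    rewrite !lfunE /= -mulmxDr -map_mxD /P1 /P2 -linearD /= HE trmx1 map_mx1.
    by rewrite mulmx1.
  by apply: memv_add; apply: memv_img.
have Hk : (k <= (\rank P1 + 1 - (n.+1 - k + 1)) + (\rank P2 + 1 - (n.+1 - k + 1)))%N.
  have := dimv_add_leqif (F P1 @: C) (F P2 @: C).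
  move/leqif_geq => Hle.
  have := dimvS HC; rewrite -/k => Hk.
  have := leq_trans Hk Hle; move: H1 H2; rewrite -/P1 -/P2.
  lia.
have Hrk : (\rank P1 + \rank P2 <= n.+1)%N.
  have := mxrank_Frobenius P1 1%:M P2.
  rewrite mulmx1 mul1mx mxrank1 /P1 /P2 -trmx_mul mulmxE HE21 trmx0 mxrank0 addn0.
  by [].
have r1 : (0 < \rank P1)%N by rewrite lt0n mxrank_eq0 /P1 -trmx0 (inj_eq trmx_inj).
have r2 : (0 < \rank P2)%N by rewrite lt0n mxrank_eq0 /P2 -trmx0 (inj_eq trmx_inj).
move: Hk Hrk r1 r2 k0 kN; lia.
Qed.

End LA.

Lemma irr_factor (K : fieldType) (p : {poly K}) : (1 < size p)%N ->
  exists pi : {poly K}, [/\ pi \is monic, irreducible_poly pi & pi %| p].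
Proof.
suff H: forall s (p : {poly K}), (size p <= s)%N -> (1 < size p)%N ->
  exists pi : {poly K}, [/\ pi \is monic, irreducible_poly pi & pi %| p].
  by apply: H.
elim=> [|s IH] {}p Hs Hp; first by rewrite leqn0 in Hs; rewrite (eqP Hs) in Hp.
have p0 : p != 0 by rewrite -size_poly_gt0; apply: ltn_trans Hp.
case: (classic (exists q : {poly K}, [/\ size q != 1%N, q %| p & ~~ (q %= p)])).
  case=> q [Hq1 Hqp Hnq].
  have q0 : q != 0 by apply: contraTneq Hqp => ->; rewrite dvd0p.
  have Hsq := dvdp_leq p0 Hqp.
  have Hne : size q != size p by rewrite dvdp_size_eqp.
  have Hq2 : (1 < size q)%N.
    by move: Hq1 q0; rewrite -size_poly_gt0; case: (size q) => [|[|]].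
  have [pi [H1 H2 H3]] : exists pi : {poly K},
      [/\ pi \is monic, irreducible_poly pi & pi %| q].
    apply: IH Hq2; rewrite -ltnS; apply: leq_trans Hs.
    by rewrite ltn_neqAle Hne Hsq.
  by exists pi; split=> //; apply: dvdp_trans H3 Hqp.
move=> Hn.
have lc0 : lead_coef p != 0 by rewrite lead_coef_eq0.
have lci0 : (lead_coef p)^-1 != 0 by rewrite invr_eq0.
exists ((lead_coef p)^-1 *: p); split.
- by rewrite monicE lead_coefZ mulVf.
- split; first by rewrite size_scale.
  move=> q Hq1 Hqd.
  have Hqp : q %| p by rewrite -(eqp_dvdr _ (eqp_scale p lci0)).
  have Hqq : q %= p.
    by apply/negPn/negP => Hnq; apply: Hn; exists q; split=> //; exact/negP.
  apply: eqp_trans Hqq _; rewrite eqp_sym; exact: eqp_scale.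
- by rewrite (eqp_dvdl _ (eqp_scale p lci0)).
Qed.

Lemma prime_power (K : fieldType) (mu : {poly K}) : mu \is monic -> (1 < size mu)%N ->
  (forall f g : {poly K}, mu = f * g -> coprimep f g -> (size f <= 1)%N \/ (size g <= 1)%N) ->
  exists (pi : {poly K}) (l : nat),
    [/\ (0 < l)%N, pi \is monic, irreducible_poly pi & mu = pi ^+ l].
Proof.
move=> Hm Hs Hcop.
have [pi [Hpm Hpi Hpd]] := irr_factor Hs.
have pi0 : pi != 0 := monic_neq0 Hpm.
have Hps : (1 < size pi)%N := Hpi.1.
have dec : forall s (p : {poly K}), (size p <= s)%N -> p != 0 ->
    exists k r, p = pi ^+ k * r /\ ~~ (pi %| r).
  elim=> [|s IH] p Hsp p0; first by move: Hsp; rewrite leqn0 size_poly_eq0 (negPf p0).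
  case Hd: (pi %| p); last by exists 0%N, p; rewrite expr0 mul1r Hd.
  have Hq := divpK Hd.
  have q0 : p %/ pi != 0 by apply: contra_neq p0 => Hq0; rewrite -Hq Hq0 mul0r.
  have [k [r [Hk Hr]]] : exists k r, p %/ pi = pi ^+ k * r /\ ~~ (pi %| r).
    apply: IH q0; rewrite size_divp //.
    have : (0 < size p)%N by rewrite size_poly_gt0.
    move: Hsp Hps; case: (size pi) => [|[|m]] //= => H1 H2 H3; rewrite leq_subLR; apply: leq_trans H1 _; rewrite addSn ltnS leq_addl //.
  exists k.+1, r; split=> //.
  by rewrite -Hq Hk exprSr mulrAC.
have mu0 : mu != 0 := monic_neq0 Hm.
have [k [r [Hk Hr]]] := dec _ _ (leqnn _) mu0.
have Hc : coprimep (pi ^+ k) r by apply: coprimep_expl; rewrite irreducible_poly_coprime.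
case: (Hcop _ _ Hk Hc) => Hsz.
- have k0 : k = 0%N.
    move: (size_exp pi k) Hsz Hps.
    case: (size (pi ^+ k)) => [|[|]] //= H _; case: (size pi) H => [|[|sp]] //= /esym/eqP; rewrite muln_eq0 /= => /eqP -> //.
  by move: Hpd; rewrite Hk k0 expr0 mul1r (negPf Hr).
- have r0 : r != 0 by apply: contra_neq mu0 => r0; rewrite Hk r0 mulr0.
  have : size r == 1%N by rewrite eqn_leq Hsz size_poly_gt0.
  case/size_poly1P => c c0 Hrc.
  have Hmk : mu = c *: pi ^+ k by rewrite Hk Hrc mulrC mul_polyC.
  have c1 : c = 1.
    move: Hm; rewrite Hmk monicE lead_coefZ.
    by have := monic_exp k Hpm; rewrite monicE => /eqP ->; rewrite mulr1 => /eqP.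
  have Hmk' : mu = pi ^+ k by rewrite Hmk c1 scale1r.
  exists pi, k; split=> //.
  case: k Hmk' {Hk Hc Hsz Hmk} => // Hmk'.
  by move: Hs; rewrite Hmk' expr0 size_poly1.
Qed.

(* n >= 1 is encoded by using length n.+1 (mxminpoly needs a size n'.+1). *)
Theorem theorem3 (K : fieldType) (L : fieldExtType K) (n : nat)
    (Hmn : (n.+1 <= \dim {:L})%N) (M : 'M[K]_n.+1) :
  (exists C : {vspace 'rV[L]_n.+1},
      [/\ C != 0%VS, C != fullv, is_M_code M C & is_MRD C]) ->
  exists (pi : {poly K}) (l : nat),
    [/\ (0 < l)%N, pi \is monic, irreducible_poly pi & mxminpoly M = pi ^+ l].
Proof.
move=> [C [C0 Cf HM HMRD]].
apply: prime_power; first exact: mxminpoly_monic.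
  by rewrite size_mxminpoly ltnS mxminpoly_nonconstant.
move=> f g Hfg Hc.
case: (leqP (size f) 1) => Hf; first by left.
case: (leqP (size g) 1) => Hg; first by right.
by case: (no_split C0 Cf HM HMRD Hfg Hc Hf Hg).
Qed.
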